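(* Let $Q$ be a finite quiver with $kQ$ of finite GK-dimension, and let $P$ be a point module over $kQ$. Then there is a cyclic vertex $v$ such that $\pi^*P\cong\pi^*\mathcal O_v$ in $\mathrm{QGr}\,kQ$.
   Context: $kQ$ is the path algebra of a finite quiver over a field $k$, graded by path length. A point module is a graded right module $M=\bigoplus_{i\ge0}M_i$ with $M=M_0\,kQ$ and $\dim_kM_i=1$ for all $i\ge0$. $\mathrm{QGr}\,kQ$ is the quotient of graded modules by torsion modules (modules each of whose elements is annihilated by $(kQ)_{\ge n}$ for some $n$), with quotient functor $\pi^*$. With finite GK-dimension each cyclic vertex $v$ lies on a unique simple cycle $p=(v=v_0,a_1,\dots,a_n,v_n=v)$, and $\mathcal O_v=e_vkQ/\bigoplus p^m a_1\cdots a_i b\,kQ$ (sum over $m\ge0$, $0\le i<n$, arrows $b\neq a_{i+1}$ with source $v_i$). *)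

(* Defs.v *)
From HB Require Import structures.
From mathcomp Require Import all_boot all_order all_algebra.
Set Implicit Arguments. Unset Strict Implicit. Unset Printing Implicit Defensive.
Import Order.TTheory GRing.Theory Num.Theory.
Local Open Scope ring_scope.

Record quiver := Quiver {
  vert : finType;  arr : finType;
  src : arr -> vert;  tgt : arr -> vert }.

(** A path is (start vertex, arrows a1 ... an), composed left to right:
    src a1 = start, tgt a_i = src a_{i+1}.  Trivial paths e_v = (v, [::]). *)
Definition qpath (Q : quiver) := (vert Q * seq (arr Q))%type.

Definition valid_path (Q : quiver) (q : qpath Q) : bool :=
  match q.2 with
  | [::] => true
  | a :: s => (src a == q.1) && path (fun a b => tgt a == src b) a s
  end.

(** number of paths of length exactly n = dim (kQ)_n *)
Definition npaths (Q : quiver) (n : nat) : nat :=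
  #|[pred vt : (vert Q * n.-tuple (arr Q))%type | valid_path (vt.1, tval vt.2)]|.

(** GKdim kQ = limsup_n log dim (kQ)_{<=n} / log n < oo  (kQ is generated
    by the finite-dimensional space kQ_0 + kQ_1, whose n-th power is kQ_{<=n}). *)
Definition finite_GKdim (Q : quiver) : Prop :=
  exists d N : nat, forall n : nat, (N <= n)%N ->
    (\sum_(j < n.+1) npaths Q j <= n ^ d)%N.

Definition simple_cycle (Q : quiver) (v : vert Q) (c : seq (arr Q)) : Prop :=
  [/\ (0 < size c)%N, valid_path (v, c), last v (map (@tgt Q) c) = v
    & uniq (map (@src Q) c)].

Definition cyclic_vertex (Q : quiver) (v : vert Q) : Prop :=
  exists c, simple_cycle v c.

(** * Graded right kQ-modules
    A right kQ-module is a k-space with operators m |-> m.e_v and m |-> m.a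
    satisfying the defining relations of kQ (e_v e_w = delta e_v,
    sum_v e_v = 1, e_{s a} a e_{t a} = a); the grading puts e_v in degree 0
    and arrows in degree 1. *)
Record gmod (k : fieldType) (Q : quiver) := GMod {
  gcar  : lmodType k;
  gdeg  : nat -> gcar -> Prop;
  gact  : gcar -> arr Q -> gcar;
  gidem : vert Q -> gcar -> gcar }.
Arguments gcar {k Q} g.
Arguments gdeg {k Q} g.
Arguments gact {k Q} g.
Arguments gidem {k Q} g.

Section GMod.
Variables (k : fieldType) (Q : quiver) (M : gmod k Q).
Local Notation T := (gcar M).

Definition pact (m : T) (q : qpath Q) : T := foldl (gact M) (gidem M q.1 m) q.2.

(** m . r  for r = sum c_j q_j in kQ *)
Definition ract (m : T) (r : seq (k * qpath Q)) : T :=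
  \sum_(cq <- r) cq.1 *: pact m cq.2.

Definition subspace (S : T -> Prop) : Prop :=
  S 0 /\ forall (c : k) (x y : T), S x -> S y -> S (c *: x + y).

Definition is_gmod : Prop :=
  (forall a (c : k) (x y : T), gact M (c *: x + y) a = c *: gact M x a + gact M y a) /\
  (forall v (c : k) (x y : T), gidem M v (c *: x + y) = c *: gidem M v x + gidem M v y) /\
  (forall v w (x : T), gidem M v (gidem M w x) = if v == w then gidem M w x else 0) /\
  (forall x : T, x = \sum_(v : vert Q) gidem M v x) /\
  (forall a (x : T), gact M x a = gact M (gidem M (src a) x) a) /\
  (forall a (x : T), gidem M (tgt a) (gact M x a) = gact M x a) /\
  (forall i, subspace (gdeg M i)) /\
  (forall i (x : T), gdeg M i x ->
     (forall a, gdeg M i.+1 (gact M x a)) /\ (forall v, gdeg M i (gidem M v x))) /\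
  (forall x : T, exists (n : nat) (F : nat -> T),
     (forall i, gdeg M i (F i)) /\ x = \sum_(i < n) F i) /\
  (forall (n : nat) (F : nat -> T), (forall i, gdeg M i (F i)) ->
     \sum_(i < n) F i = 0 -> forall i, (i < n)%N -> F i = 0).

Definition gsubmod (S : T -> Prop) : Prop :=
  [/\ subspace S,
      forall x a, S x -> S (gact M x a),
      forall x v, S x -> S (gidem M v x)
    & forall x, S x -> exists (n : nat) (F : nat -> T),
         (forall i, gdeg M i (F i) /\ S (F i)) /\ x = \sum_(i < n) F i].

Definition torsion_elt (x : T) : Prop :=
  exists n : nat, forall q : qpath Q, valid_path q -> (n <= size q.2)%N -> pact x q = 0.

Definition torsion_quot (S : T -> Prop) : Prop :=
  forall x : T, exists n : nat, forall q : qpath Q, valid_path q ->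
    (n <= size q.2)%N -> S (pact x q).

Definition point_module : Prop :=
  [/\ is_gmod,
      (forall x : T, exists s : seq (T * qpath Q),
          (forall yq, yq \in s -> gdeg M 0 yq.1 /\ valid_path yq.2) /\
          x = \sum_(yq <- s) pact yq.1 yq.2)
    & forall i, exists x : T, [/\ gdeg M i x, x <> 0 &
          forall y, gdeg M i y -> exists c : k, y = c *: x]].

End GMod.

Definition coef (k : fieldType) (Q : quiver) (r : seq (k * qpath Q)) (q : qpath Q) : k :=
  \sum_(cq <- r | cq.2 == q) cq.1.

(** basis paths of J = (+)_{m, i, b} p^m a1 ... ai b kQ, p = (v, c) *)
Definition in_J (Q : quiver) (v : vert Q) (c : seq (arr Q)) (q : qpath Q) : Prop :=
  [/\ q.1 = v, valid_path q &
      exists (m i : nat) (b : arr Q) (rest : seq (arr Q)),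
        [/\ (i < size c)%N, b != nth b c i &
            q.2 = flatten (nseq m c) ++ take i c ++ b :: rest]].

(** N is isomorphic (as graded module) to O_v = e_v kQ / J: N is generated by
    x in N_0 with x = x e_v, and the annihilator of x in e_v kQ is exactly J. *)
Definition is_Ov (k : fieldType) (Q : quiver) (v : vert Q) (c : seq (arr Q))
    (N : gmod k Q) : Prop :=
  is_gmod N /\ exists x : gcar N,
  [/\ gdeg N 0 x, gidem N v x = x,
      forall y : gcar N, exists r : seq (k * qpath Q),
        (forall cq, cq \in r -> cq.2.1 = v /\ valid_path cq.2) /\ y = ract x r
    & forall r : seq (k * qpath Q),
        (forall cq, cq \in r -> cq.2.1 = v /\ valid_path cq.2) ->
        (ract x r = 0 <-> forall q, coef r q != 0 -> in_J v c q)].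

(** pi^* M ~= pi^* N in QGr kQ: there are a graded submodule M' of M with
    M/M' torsion, a torsion graded submodule N' of N, and a degree-0
    homomorphism f : M' -> N such that M' -> N -> N/N' has torsion kernel
    and torsion cokernel (a roof representing an isomorphism in the Serre
    quotient Gr kQ / Tors). *)
Definition qgr_iso (k : fieldType) (Q : quiver) (M N : gmod k Q) : Prop :=
  exists (M' : gcar M -> Prop) (N' : gcar N -> Prop) (f : gcar M -> gcar N),
  gsubmod M' /\ torsion_quot M' /\ gsubmod N' /\ (forall y, N' y -> torsion_elt y) /\
  (forall (c : k) x y, M' x -> M' y -> f (c *: x + y) = c *: f x + f y) /\
  (forall x a, M' x -> f (gact M x a) = gact N (f x) a) /\
  (forall x v, M' x -> f (gidem M v x) = gidem N v (f x)) /\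
  (forall i x, M' x -> gdeg M i x -> gdeg N i (f x)) /\
  (forall x, M' x -> N' (f x) -> torsion_elt x) /\
  (forall y : gcar N, exists n : nat, forall q, valid_path q -> (n <= size q.2)%N ->
     exists x y', [/\ M' x, N' y' & pact y q = f x + y']).

(* Main.v *)
Require Import Defs.
From HB Require Import structures.
From mathcomp Require Import all_boot all_order all_algebra.
From mathcomp Require Import zify.
From Stdlib Require Import Classical ClassicalEpsilon.

Module Comb.
Set Implicit Arguments. Unset Strict Implicit. Unset Printing Implicit Defensive.

Lemma sq_le_exp t : 4 <= t -> t * t <= 2 ^ t.
Proof.
elim: t => // t IH; rewrite leq_eqVlt => /orP [/eqP <- //| Ht].
have {}IH := IH Ht. rewrite expnS. nia.
Qed.

Lemma leq_pow a b d : a <= b -> a ^ d <= b ^ d.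
Proof. by case: d => [|d] h; rewrite ?expn0 // leq_exp2r. Qed.

Lemma expo_big d L N : 0 < L -> exists m, N <= m * L /\ (m * L) ^ d < 2 ^ m.
Proof.
move=> L0; set t := 4 + 2 * d + L + N.
have ht : t < 2 ^ t by apply: ltn_expl.
have hL : L < 2 ^ L by apply: ltn_expl.
exists (2 ^ t); split.
  have : t <= 2 ^ t * L by nia.
  rewrite /t; lia.
have h1 : (2 ^ t * L) ^ d <= (2 ^ (t + L)) ^ d.
  apply: leq_pow; rewrite expnD leq_mul2l; apply/orP; right; exact: ltnW.
apply: (leq_ltn_trans h1); rewrite -expnM ltn_exp2l //.
have : t * t <= 2 ^ t by apply: sq_le_exp; rewrite /t; lia.
rewrite /t; nia.
Qed.

Section Comb.
Variable Q : quiver.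
Implicit Types (u : vert Q) (p q : seq (arr Q)).

Definition endpt u p := last u (map (@tgt Q) p).

Lemma valid_cons u a p :
  valid_path (u, a :: p) = (src a == u) && valid_path (tgt a, p).
Proof. by case: p => [|b p]; rewrite /valid_path //= [src b == _]eq_sym. Qed.

Lemma valid_cat u p q :
  valid_path (u, p ++ q) = valid_path (u, p) && valid_path (endpt u p, q).
Proof.
elim: p u => [|a p IH] u //=.
by rewrite !valid_cons IH andbA.
Qed.

Lemma endpt_cat u p q : endpt u (p ++ q) = endpt (endpt u p) q.
Proof. by rewrite /endpt map_cat last_cat. Qed.

Lemma endpt_cons u a p : endpt u (a :: p) = endpt (tgt a) p.
Proof. by []. Qed.

Lemma npaths_ge n (A : {set (vert Q * n.-tuple (arr Q))}) :
  (forall vt, vt \in A -> valid_path (vt.1, tval vt.2)) -> #|A| <= npaths Q n.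
Proof.
move=> H; rewrite /npaths; apply: subset_leq_card; apply/subsetP => vt /H.
by rewrite inE.
Qed.

Section Word.
Variables (u : vert Q) (p1 p2 : seq (arr Q)).
Definition word (bs : seq bool) := flatten [seq if b then p1 else p2 | b <- bs].

Hypotheses (v1 : valid_path (u, p1)) (v2 : valid_path (u, p2))
  (e1 : endpt u p1 = u) (e2 : endpt u p2 = u) (s12 : size p1 = size p2)
  (n12 : p1 != p2).

Lemma word_valid bs : valid_path (u, word bs) && (endpt u (word bs) == u).
Proof.
elim: bs => [|b bs IH] //=.
case/andP: IH => IH1 /eqP IH2.
by case: b => /=; rewrite valid_cat endpt_cat ?e1 ?e2 ?v1 ?v2 IH1 IH2 /= eqxx.
Qed.

Lemma size_word bs : size (word bs) = size bs * size p1.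
Proof.
elim: bs => [|b bs IH] //=; rewrite size_cat IH mulSn; case: b => //.
by rewrite s12.
Qed.

Lemma word_inj bs1 bs2 : size bs1 = size bs2 -> word bs1 = word bs2 -> bs1 = bs2.
Proof.
elim: bs1 bs2 => [|b1 bs1 IH] [|b2 bs2] //= [] hs /eqP.
rewrite eqseq_cat; last by case: b1; case: b2.
case/andP => /eqP hb /eqP hw; rewrite (IH _ hs hw); congr (_ :: _).
by move: hb n12; case: b1; case: b2 => // ->; rewrite eqxx.
Qed.
End Word.

Lemma no_two_loops u p1 p2 : finite_GKdim Q ->
  valid_path (u, p1) -> valid_path (u, p2) -> endpt u p1 = u -> endpt u p2 = u ->
  size p1 = size p2 -> 0 < size p1 -> p1 = p2.
Proof.
move=> [d [N HN]] v1 v2 e1 e2 s12 L0.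
apply/eqP; apply/negPn/negP => n12.
have [m [Nm Hm]] := expo_big d N L0.
set L := size p1 in Nm Hm L0.
have szw (t : m.-tuple bool) : size (word p1 p2 t) == m * L.
  by rewrite (size_word s12) size_tuple.
pose G (t : m.-tuple bool) := (u, Tuple (szw t)).
have Ginj : injective G.
  move=> t1 t2 [] /(word_inj s12 n12) h; apply: val_inj; apply: h.
  by rewrite !size_tuple.
have h1 : #|[set G t | t in [set: m.-tuple bool]]| <= npaths Q (m * L).
  apply: npaths_ge => vt /imsetP [t _ ->] /=.
  by case/andP: (word_valid v1 v2 e1 e2 t).
move: h1; rewrite card_imset // cardsT card_tuple card_bool => h1.
have h2 : npaths Q (m * L) <= \sum_(j < (m * L).+1) npaths Q j.
  by rewrite big_ord_recr /= leq_addl.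
have := HN _ Nm; lia.
Qed.

Section Walk.
Variable GK : finite_GKdim Q.
Variable al : nat -> arr Q.
Hypothesis Hlink : forall i, tgt (al i) = src (al i.+1).
Definition w i := src (al i).

Fixpoint blk s L := if L is L'.+1 then al s :: blk s.+1 L' else [::].

Lemma size_blk s L : size (blk s L) = L.
Proof. by elim: L s => //= L IH s; rewrite IH. Qed.

Lemma nth_blk a s L j : j < L -> nth a (blk s L) j = al (s + j).
Proof.
elim: L s j => // L IH s [|j] /=; first by rewrite addn0.
by move=> hj; rewrite IH // addSnnS.
Qed.

Lemma blk_valid s L : valid_path (w s, blk s L).
Proof.
elim: L s => // L IH s /=; rewrite valid_cons eqxx /= Hlink; exact: IH.
Qed.

Lemma blk_end s L : endpt (w s) (blk s L) = w (s + L).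
Proof.
elim: L s => [|L IH] s /=; first by rewrite addn0.
by rewrite endpt_cons Hlink IH addSnnS.
Qed.

Lemma blk_eq s s' L : 0 < L -> w s = w s' -> w (s + L) = w s ->
  w (s' + L) = w s -> forall j, j < L -> al (s + j) = al (s' + j).
Proof.
move=> L0 e1 e2 e3 j hj.
have v2 : valid_path (w s, blk s' L) by rewrite e1 blk_valid.
have ee1 : endpt (w s) (blk s L) = w s by rewrite blk_end.
have ee2 : endpt (w s) (blk s' L) = w s by rewrite e1 blk_end e3 e1.
have := no_two_loops GK (blk_valid s L) v2 ee1 ee2.
rewrite !size_blk => /(_ erefl L0) h.
by rewrite -(nth_blk (al 0) s hj) h nth_blk.
Qed.

Lemma inf_visit : exists u, forall N, exists s, N <= s /\ w s = u.
Proof.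
apply: NNPP => H.
have H' : forall u, exists N, forall s, N <= s -> w s != u.
  move=> u; apply: NNPP => Hu; apply: H; exists u => N.
  apply: NNPP => HN; apply: Hu; exists N => s Ns; apply/eqP => e.
  by apply: HN; exists s.
have : forall l : seq (vert Q), exists N, forall u, u \in l -> forall s, N <= s -> w s != u.
  elim => [|u l [N2 IH]]; first by exists 0.
  have [N1 H1] := H' u; exists (maxn N1 N2) => x; rewrite inE => /orP [/eqP -> | hx] s hs.
    by apply: H1; apply: leq_trans hs; apply: leq_maxl.
  by apply: IH => //; apply: leq_trans hs; apply: leq_maxr.
case/(_ (enum (vert Q))) => N HN.
by have := HN (w N) (mem_enum _ _) N (leqnn N); rewrite eqxx.
Qed.

Definition per t0 g := forall t, t0 <= t -> al (t + g) = al t.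

Lemma per_mul t0 g k : per t0 g -> per t0 (k * g).
Proof.
move=> hp; elim: k => [|k IH] t ht; first by rewrite mul0n addn0.
rewrite mulSn (addnC g) addnA hp ?IH //; exact: leq_trans ht (leq_addr _ _).
Qed.

Section Visits.
Variable u : vert Q.
Hypothesis Hinf : forall N, exists s, N <= s /\ w s = u.

Definition first_ret r r' :=
  [/\ r < r', w r = u, w r' = u & forall x, r < x -> x < r' -> w x != u].

Lemma next_ex s : exists s', s < s' /\ w s' = u /\ forall x, s < x -> x < s' -> w x != u.
Proof.
have ex : exists s', (s < s') && (w s' == u).
  have [s' [h1 h2]] := Hinf s.+1; exists s'; by rewrite h1 h2 eqxx.
case: (ex_minnP ex) => s' /andP [h1 /eqP h2] hmin; exists s'; do 2! split => //.
move=> x hx hx'; apply/negP => /eqP e.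
by have := hmin x; rewrite hx e eqxx => /(_ isT); rewrite leqNgt hx'.
Qed.

Lemma gap r r' s s' : first_ret r r' -> first_ret s s' ->
  r' - r = s' - s /\ forall j, j < r' - r -> al (r + j) = al (s + j).
Proof.
wlog: r r' s s' / r' - r <= s' - s.
  move=> Hw hr hs; case: (leqP (r' - r) (s' - s)) => h; first exact: Hw.
  have [e1 e2] := Hw _ _ _ _ (ltnW h) hs hr; split => // j hj.
  by rewrite e2 // e1.
move=> hle [hr1 hr2 hr3 hr4] [hs1 hs2 hs3 hs4].
set L := r' - r; set L' := s' - s.
have eL : r + L = r' by rewrite /L; lia.
have eL' : s + L' = s' by rewrite /L'; lia.
have L0 : 0 < L by rewrite /L; lia.
case: (ltngtP L L') => hLL'; last first.
- split => // j hj; apply: (blk_eq (s:=r) (s':=s) (L:=L)) => //;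
    [by rewrite hr2 hs2 | by rewrite eL hr3 hr2 | by rewrite hLL' eL' hs3 hr2].
- by move: hle; rewrite leqNgt hLL'.
exfalso.
have vcat : forall a b A B, w a = u -> w b = u -> w (a + A) = u -> w (b + B) = u ->
    valid_path (u, blk a A ++ blk b B) && (endpt u (blk a A ++ blk b B) == u).
  move=> a b A B ha hb hA hB.
  have ea : endpt u (blk a A) = u by rewrite -{1}ha blk_end hA.
  have eb : endpt u (blk b B) = u by rewrite -{1}hb blk_end hB.
  have va : valid_path (u, blk a A) by rewrite -ha blk_valid.
  have vb : valid_path (u, blk b B) by rewrite -hb blk_valid.
  by rewrite valid_cat endpt_cat va ea vb eb eqxx.
have := vcat r s L L' hr2 hs2; rewrite eL eL' => /(_ hr3 hs3) /andP [va /eqP ea].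
have := vcat s r L' L hs2 hr2; rewrite eL eL' => /(_ hs3 hr3) /andP [vb /eqP eb].
have := no_two_loops GK va vb ea eb.
rewrite !size_cat !size_blk addnC => /(_ erefl); rewrite addn_gt0 L0 orbT => /(_ isT) e.
have : take L (blk r L ++ blk s L') = take L (blk s L' ++ blk r L) by rewrite e.
rewrite take_size_cat ?size_blk // takel_cat ?size_blk ?(ltnW hLL') // => e'.
have : nth (al 0) (blk r L) L.-1 = nth (al 0) (take L (blk s L')) L.-1 by rewrite e'.
rewrite nth_take ?prednK // !nth_blk ?prednK ?(ltn_trans _ hLL') ?prednK // => ea'.
have wsL : w (s + L) = u.
  have -> : s + L = (s + L.-1).+1 by lia.
  rewrite /w -Hlink -ea' Hlink.
  have -> : (r + L.-1).+1 = r' by lia.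
  exact: hr3.
have h1 : s < s + L by lia.
have h2 : s + L < s' by lia.
by have := hs4 _ h1 h2; rewrite wsL eqxx.
Qed.

End Visits.

Lemma eventually_periodic : exists t0 L, 0 < L /\ per t0 L.
Proof.
have [u Hinf] := inf_visit.
have [t0 [_ h0]] := Hinf 0.
have [t1 [h01 [h1 h1m]]] := next_ex Hinf t0.
have f01 : first_ret u t0 t1 by [].
set L := t1 - t0.
have step : forall s, w s = u -> w (s + L) = u /\ forall j, j < L -> al (s + j) = al (t0 + j).
  move=> s hs; have [s' [hs' [hs'1 hs'2]]] := next_ex Hinf s.
  have [e1 e2] := gap f01 (And4 hs' hs hs'1 hs'2).
  have -> : s + L = s' by rewrite /L e1; lia.
  by split => // j hj; rewrite e2.
have vis : forall k, w (t0 + k * L) = u.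
  elim => [|k IH]; first by rewrite mul0n addn0.
  by rewrite mulSn (addnC L) addnA; case: (step _ IH).
exists t0, L; split; first by rewrite /L; lia.
move=> t ht.
have -> : t = (t0 + (t - t0) %/ L * L) + (t - t0) %% L.
  by rewrite -addnA -divn_eq; lia.
have hj : (t - t0) %% L < L by rewrite ltn_mod /L; lia.
set s := t0 + _ * L.
have [_ hA] := step s (vis _).
have [_ hB] := step (s + L) (proj1 (step s (vis _))).
by rewrite addnAC hB // hA.
Qed.

Lemma wf_min (P : nat -> Prop) : (exists n, P n) -> exists n, P n /\ forall m, m < n -> ~ P m.
Proof.
move=> [n Pn]; elim: n {-2}n (leqnn n) Pn => [|N IH] n hn Pn.
  by exists n; split => // m; move: hn; lia.
case: (classic (exists m, m < n /\ P m)) => [[m [hm Pm]]|H].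
  by apply: (IH m) => //; lia.
by exists n; split => // m hm Pm; apply: H; exists m.
Qed.

Record cyc_data := CycData {
  cd_n1 : nat; cd_p : nat;
  cd_p0 : 0 < cd_p;
  cd_div : cd_p %| cd_n1;
  cd_simple : simple_cycle (w cd_n1) (blk cd_n1 cd_p);
  cd_per : forall i, cd_n1 <= i -> al i = nth (al 0) (blk cd_n1 cd_p) (i %% cd_p);
  cd_only : forall i a, cd_n1 <= i -> src a = w i -> tgt a = w i.+1 -> a = al i }.

Lemma cyc_exists : exists cd : cyc_data, True.
Proof.
have [t0 [L [L0 hL]]] := eventually_periodic.
have [p [[p0 hp] pmin]] := @wf_min (fun g => 0 < g /\ per t0 g) (ex_intro _ L (conj L0 hL)).
set n1 := t0 * p.
have tn1 : t0 <= n1 by rewrite /n1 leq_pmulr.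
have wper : forall i, t0 <= i -> w (i + p) = w i by move=> i hi; rewrite /w hp.
have pshift : forall i x, t0 <= i -> al (i + x) = al (i + x %% p).
  move=> i x hi; rewrite {1}(divn_eq x p) addnCA addnC (per_mul _ hp) //.
  exact: leq_trans hi (leq_addr _ _).
have dist : forall i g, t0 <= i -> 0 < g -> g < p -> w (i + g) != w i.
  move=> i g hi g0 gp; apply/negP => /eqP e.
  have ig : t0 <= i + g by exact: leq_trans hi (leq_addr _ _).
  have hb : forall j, j < p -> al (i + j) = al (i + g + j).
    apply: (blk_eq (s:=i) (s':=i+g) (L:=p)) => //; first by rewrite wper.
    by rewrite wper // e.
  have pig : per i g.
    move=> t ht; have -> : t = i + (t - i) by lia.
    rewrite addnAC (pshift (i + g)) // -hb ?ltn_mod // -pshift //.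
  have pg : per t0 g.
    move=> t ht.
    have hk : per t0 (i * p) by apply: per_mul.
    have tp : i <= t + i * p by rewrite (leq_trans _ (leq_addl _ _)) // leq_pmulr.
    by rewrite -(hk t ht) -(hk (t + g)) ?(leq_trans ht) ?leq_addr // addnAC pig.
  by apply: (pmin g gp); split.
have only : forall i a, n1 <= i -> src a = w i -> tgt a = w i.+1 -> a = al i.
  move=> i a hi hs ht.
  have hi0 : t0 <= i by apply: leq_trans hi.
  have v1 : valid_path (w i, a :: blk i.+1 p.-1) by rewrite valid_cons hs eqxx /= ht blk_valid.
  have e1 : endpt (w i) (a :: blk i.+1 p.-1) = w i.
    by rewrite endpt_cons ht blk_end addSnnS prednK // wper.
  have := no_two_loops GK v1 (blk_valid i p) e1.
  rewrite blk_end wper // size_blk /= size_blk prednK // => /(_ erefl erefl p0).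
  by case: (p) p0 => // p' _ /= [].
have simple : simple_cycle (w n1) (blk n1 p).
  split; rewrite ?size_blk ?blk_valid //; first by rewrite -/(endpt _ _) blk_end wper.
  apply/(uniqP (w 0)) => j j'; rewrite !inE size_map size_blk => hj hj'.
  rewrite !(nth_map (al 0)) ?size_blk // !nth_blk // -!/(w _) => e.
  apply/eqP; apply: contraT => ne.
  wlog: j j' hj hj' e ne / j < j'.
    move=> Hw; case: (ltngtP j j') => h; first exact: (Hw j j').
    - by apply: (Hw j' j) => //; rewrite eq_sym.
    - by rewrite h eqxx in ne.
  move=> hjj'.
  have := dist (n1 + j) (j' - j); rewrite -addnA subnKC ?(ltnW hjj') // e eqxx.
  by apply => //; rewrite ?(leq_trans tn1) ?leq_addr //; lia.
have per' : forall i, n1 <= i -> al i = nth (al 0) (blk n1 p) (i %% p).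
  move=> i hi; rewrite nth_blk ?ltn_mod //.
  have -> : i = n1 + (i - n1) by lia.
  rewrite (pshift n1) // /n1 modnMDl.
  by [].
by exists (CycData p0 (dvdn_mull _ (dvdnn p)) simple per' only).
Qed.

End Walk.
End Comb.

End Comb.
Import Comb.

Module Omod.
Set Implicit Arguments. Unset Strict Implicit. Unset Printing Implicit Defensive.
Import GRing.Theory.

Lemma mkseq_cons T (f : nat -> T) n : mkseq f n.+1 = f 0 :: mkseq (fun t => f t.+1) n.
Proof.
apply: (@eq_from_nth _ (f 0)); first by rewrite size_mkseq [size (_ :: _)]/= size_mkseq.
move=> i; rewrite size_mkseq => hi.
case: i hi => [|i] hi; first by rewrite nth_mkseq.
by rewrite nth_mkseq //= nth_mkseq.
Qed.

Section Ov.
Variables (k : fieldType) (Q : quiver) (v : vert Q) (c : seq (arr Q)) (a0 : arr Q).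
Hypothesis Hc : simple_cycle v c.
Local Notation l := (size c).

Definition cyc j := nth a0 c (j %% l).
Definition cv j := src (cyc j).

Lemma l_gt0 : 0 < l. Proof. by case: Hc. Qed.

Lemma valid_nth u p i : valid_path (u, p) -> i.+1 < size p ->
  tgt (nth a0 p i) = src (nth a0 p i.+1).
Proof.
elim: p u i => // a p IH u i; rewrite valid_cons => /andP [_ hv].
case: i => [|i] /=; last by move=> hi; apply: (IH _ _ hv).
by case: p {IH} hv => // b p; rewrite valid_cons => /andP [/eqP ->].
Qed.

Lemma cv0 : cv 0 = v.
Proof.
rewrite /cv /cyc mod0n; case: Hc; case: c => // a s _.
by rewrite valid_cons => /andP [/eqP -> _].
Qed.

Lemma cyc_link j : tgt (cyc j) = cv j.+1.
Proof.
rewrite /cv /cyc; case: Hc => l0 hv hl _.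
have hm : j %% l < l by rewrite ltn_mod.
have -> : j.+1 %% l = (j %% l).+1 %% l by rewrite -addn1 -modnDml addn1.
case: (ltngtP (j %% l).+1 l) => h.
- by rewrite (modn_small h) (valid_nth hv).
- by move: h; rewrite ltnS leqNgt hm.
- have e0 : src (nth a0 c 0) = v by have := cv0; rewrite /cv /cyc mod0n.
  rewrite h modnn e0 -hl.
  have -> : j %% l = (size c).-1 by rewrite -[X in _ = X.-1]h.
  rewrite -(nth_map a0 v); last by rewrite prednK.
  by rewrite -(size_map (@tgt Q) c) nth_last.
Qed.

Local Open Scope ring_scope.

Definition sel (P : nat -> bool) (x : {poly k}) : {poly k} :=
  \poly_(j < size x) (if P j then x`_j else 0).

Lemma coef_sel P x j : (sel P x)`_j = if P j then x`_j else 0.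
Proof.
rewrite coef_poly; case: ltnP => h; first by [].
by case: (P j) => //; rewrite nth_default.
Qed.

Definition O_act (x : {poly k}) (a : arr Q) := sel (fun j => cyc j == a) x * 'X.
Definition O_idem (u : vert Q) (x : {poly k}) := sel (fun j => cv j == u) x.
Definition O_deg (i : nat) (x : {poly k}) := exists b : k, x = b *: 'X^i.

Definition Om : gmod k Q := @GMod k Q {poly k} O_deg O_act O_idem.

Lemma coef_act x a j :
  (O_act x a)`_j = if j == 0%N then 0 else if cyc j.-1 == a then x`_j.-1 else 0.
Proof. by rewrite /O_act coefMX coef_sel. Qed.

Lemma coef_idem u x j : (O_idem u x)`_j = if cv j == u then x`_j else 0.
Proof. exact: coef_sel. Qed.

Lemma act_Xn j a : O_act 'X^j a = if cyc j == a then 'X^(j.+1) else 0.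
Proof.
apply/polyP => i; rewrite coef_act; case: i => [|i] /=.
  by case: ifP; rewrite ?coef0 // coefXn.
rewrite coefXn; case: (eqVneq i j) => [->|ne].
  by case: (cyc j == a); rewrite ?coef0 // coefXn eqxx.
by case: (cyc i == a); case: (cyc j == a); rewrite ?coef0 ?coefXn ?eqSS ?(negbTE ne).
Qed.

Lemma act0 a : O_act 0 a = 0.
Proof. by apply/polyP => i; rewrite coef_act !coef0; case: ifP => //; case: ifP. Qed.

Lemma idem0 u : O_idem u 0 = 0.
Proof. by apply/polyP => i; rewrite coef_idem !coef0; case: ifP. Qed.

Lemma fold_act0 p : foldl O_act 0 p = 0.
Proof. by elim: p => //= a p IH; rewrite act0. Qed.

Lemma fold_act p j : foldl O_act ('X^j) p =
  if p == mkseq (fun t => cyc (j + t)) (size p) then 'X^(j + size p) else 0.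
Proof.
elim: p j => [|a p IH] j /=; first by rewrite addn0.
rewrite act_Xn mkseq_cons eqseq_cons addn0 eq_sym.
case: eqP => _ /=; last by rewrite fold_act0.
rewrite IH addSnnS.
have -> : mkseq (fun t => cyc (j + t.+1)) (size p) = mkseq (fun t => cyc (j.+1 + t)) (size p).
  by apply: eq_mkseq => t; rewrite addnS.
by [].
Qed.

Lemma fold_act_low z p i : (i < size p)%N -> (foldl O_act z p)`_i = 0.
Proof.
elim/last_ind: p i => // p a IH i; rewrite size_rcons foldl_rcons coef_act.
case: i => [|i] //= hi; case: ifP => // _; exact: IH.
Qed.

Lemma Om_gmod : is_gmod Om.
Proof.
rewrite /is_gmod /=.
split.
  move=> a b x y; apply/polyP => j; rewrite coefD coefZ !coef_act coefD coefZ.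
  by case: ifP => _; rewrite ?mulr0 ?addr0 //; case: ifP => _; rewrite ?mulr0 ?addr0.
split.
  move=> u b x y; apply/polyP => j; rewrite coefD coefZ !coef_idem coefD coefZ.
  by case: ifP => _; rewrite ?mulr0 ?addr0.
split.
  move=> u u' x; case: eqP => [<-|ne]; apply/polyP => j; rewrite !coef_idem ?coef0.
    by case: (cv j == u).
  case: (eqVneq (cv j) u) => [->|] //.
  by rewrite (negbTE (introN eqP ne)).
split.
  move=> x; apply/polyP => j; rewrite coef_sum (bigD1 (cv j)) //= coef_idem eqxx.
  rewrite big1 ?addr0 // => u hu; rewrite coef_idem; case: eqP => // e.
  by rewrite e eqxx in hu.
split.
  move=> a x; apply/polyP => j; rewrite !coef_act coef_idem.
  case: ifP => // _; case: eqP => // <-; by rewrite /cv eqxx.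
split.
  move=> a x; apply/polyP => j; rewrite coef_idem !coef_act.
  case: j => [|j] /=; first by case: ifP.
  case: (eqVneq (cyc j) a) => [<-|_]; first by rewrite -cyc_link eqxx.
  by case: ifP.
split.
  move=> i; split; first by exists 0; rewrite scale0r.
  move=> b x y [bx ->] [b2 ->]; exists (b * bx + b2); by rewrite scalerDl scalerA.
split.
  move=> i x [b ->]; split.
    move=> a; exists (if cyc i == a then b else 0); apply/polyP => j.
    rewrite coef_act !coefZ !coefXn; case: j => [|j] /=; first by rewrite mulr0.
    by rewrite eqSS; case: (eqVneq j i) => [->|_]; case: ifP; rewrite ?mulr0 ?mul0r.
  move=> u; exists (if cv i == u then b else 0); apply/polyP => j.
  rewrite coef_idem !coefZ !coefXn; case: (eqVneq j i) => [->|ne]; case: ifP;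
    rewrite ?mul0r ?mulr0 //.
split.
  move=> x; exists (size x), (fun i => x`_i *: 'X^i); split.
    by move=> i; exists x`_i.
  by rewrite -poly_def coefK.
move=> n F HF Hs i hi.
have hF : forall j, F j = (F j)`_j *: 'X^j.
  by move=> j; case: (HF j) => b ->; rewrite coefZ coefXn eqxx mulr1.
have := congr1 (fun p : {poly k} => p`_i) Hs; rewrite coef_sum coef0.
rewrite (bigD1 (Ordinal hi)) //= big1 ?addr0 => [e|j hj].
  by rewrite (hF i) e scale0r.
rewrite (hF j) coefZ coefXn; case: eqP => [e|]; rewrite ?mulr0 //.
by move: hj; rewrite -val_eqE /= -e eqxx.
Qed.


Definition pref n := mkseq cyc n.

Lemma idem_one : O_idem v 1 = 1.
Proof.
apply/polyP => j; rewrite coef_idem coef1; case: j => [|j]; first by rewrite cv0 eqxx.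
by case: ifP.
Qed.

Lemma pact_one p : @pact k Q Om 1 (v, p) = if p == pref (size p) then 'X^(size p) else 0.
Proof. by rewrite /pact /= idem_one -(expr0 'X) fold_act. Qed.

Lemma coef_pact_one p i : (@pact k Q Om 1 (v, p))`_i = (p == pref i)%:R.
Proof.
have key : (p == pref i) = (p == pref (size p)) && (i == size p).
  apply/eqP/andP => [->|[/eqP e /eqP ->] //]; by rewrite /pref size_mkseq !eqxx.
rewrite pact_one key; case: (p == pref (size p)); by rewrite ?coefXn ?coef0.
Qed.

Lemma valid_shift j n : valid_path (cv j, mkseq (fun t => cyc (j + t)) n).
Proof.
elim: n j => // n IH j; rewrite mkseq_cons valid_cons addn0 /cv eqxx /=.
rewrite cyc_link.
have -> : mkseq (fun t => cyc (j + t.+1)) n = mkseq (fun t => cyc (j.+1 + t)) n.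
  by apply: eq_mkseq => t; rewrite addnS.
exact: IH.
Qed.

Lemma valid_pref n : valid_path (v, pref n).
Proof. by have := valid_shift 0 n; rewrite cv0. Qed.

Lemma size_flatten_nseq m : size (flatten (nseq m c)) = (m * l)%N.
Proof. by elim: m => //= m IH; rewrite size_cat IH mulSn. Qed.

Lemma nth_flatten_nseq x m s : (s < m * l)%N ->
  nth x (flatten (nseq m c)) s = nth x c (s %% l).
Proof.
elim: m s => // m IH s; rewrite mulSn /= nth_cat => hs.
case: ltnP => h; first by rewrite modn_small.
rewrite IH; last by move: hs h; lia.
have -> : (s = l + (s - l))%N by lia.
by rewrite modnDl addKn.
Qed.

Lemma pref_split m i : (i < l)%N -> pref (m * l + i) = flatten (nseq m c) ++ take i c.
Proof.
move=> hi; apply: (@eq_from_nth _ a0).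
  by rewrite /pref size_mkseq size_cat size_flatten_nseq size_take hi.
move=> s; rewrite /pref size_mkseq => hs; rewrite nth_mkseq // /cyc nth_cat size_flatten_nseq.
case: ltnP => h; first by rewrite nth_flatten_nseq.
rewrite nth_take; last by lia.
have -> : (s = m * l + (s - m * l))%N by lia.
by rewrite modnMDl addKn modn_small //; lia.
Qed.

Lemma notJ_pref i : ~ in_J v c (v, pref i).
Proof.
case=> _ _ [m [j [b [rest [hj hb e]]]]].
have hs : (m * l + j < i)%N.
  have := congr1 size e; rewrite /pref size_mkseq !size_cat size_flatten_nseq size_take hj /=.
  lia.
have := congr1 (fun s => nth a0 s (m * l + j)) e.
rewrite /= /pref nth_mkseq // /cyc modnMDl modn_small // nth_cat size_flatten_nseq.
rewrite ltnNge leq_addr /= addKn nth_cat size_take hj ltnn subnn /= => eb.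
by rewrite (set_nth_default a0 b hj) eb eqxx in hb.
Qed.

Lemma J_of p : valid_path (v, p) -> p != pref (size p) -> in_J v c (v, p).
Proof.
move=> hv ne; split => //.
have ex : exists t, (t < size p)%N && (nth a0 p t != cyc t).
  apply: NNPP => H; move/negP: ne; apply; apply/eqP; apply: (@eq_from_nth _ a0).
    by rewrite /pref size_mkseq.
  move=> t ht; rewrite /pref nth_mkseq //; apply/eqP; apply: contraT => h.
  by exfalso; apply: H; exists t; rewrite ht h.
case: (ex_minnP ex) => t /andP [ht hne] hmin.
exists (t %/ l)%N, (t %% l)%N, (nth a0 p t), (drop t.+1 p); split.
- by rewrite ltn_mod l_gt0.
- rewrite (@set_nth_default _ c a0 (nth a0 p t) (t %% l)%N); last by rewrite ltn_mod l_gt0.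
  exact: hne.
rewrite catA -pref_split ?ltn_mod ?l_gt0 // -divn_eq -(drop_nth a0 ht).
have -> : pref t = take t p.
  apply: (@eq_from_nth _ a0); first by rewrite /pref size_mkseq size_take ht.
  move=> s; rewrite /pref size_mkseq => hs; rewrite nth_mkseq // nth_take //.
  apply/eqP; apply: contraT => h; rewrite eq_sym in h; have := hmin s; rewrite h (ltn_trans hs ht) /= => /(_ isT).
  by rewrite leqNgt hs.
by rewrite cat_take_drop.
Qed.

Lemma coef_ract r i : (forall cq, cq \in r -> cq.2.1 = v) ->
  (@ract k Q Om 1 r)`_i = coef r (v, pref i).
Proof.
move=> hr; rewrite /ract coef_sum /coef big_mkcond /=.
rewrite [RHS]big_mkcond; apply: eq_big_seq => cq hcq; rewrite coefZ.
move: hcq (hr _ hcq); case: cq => b [u p] /= _ ->.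
rewrite coef_pact_one xpair_eqE eqxx /=.
by case: eqP => _; rewrite ?mulr1 ?mulr0.
Qed.

Lemma coef_in (r : seq (k * qpath Q)) (q : qpath Q) : coef r q != 0 -> exists2 cq, cq \in r & cq.2 = q.
Proof.
move=> h; apply: NNPP => H; move: h; rewrite /coef big1_seq ?eqxx // => cq /andP [/eqP e hin].
by exfalso; apply: H; exists cq.
Qed.

Lemma Om_Ov : is_Ov v c Om.
Proof.
split; first exact: Om_gmod.
exists 1; split.
- by exists 1; rewrite scale1r expr0.
- exact: idem_one.
- move=> y; exists [seq (y`_i, (v, pref i)) | i <- iota 0 (size y)]; split.
    by move=> cq /mapP [i _ ->]; split => //; exact: valid_pref.
  rewrite /ract big_map.
  rewrite (eq_bigr (fun i => y`_i *: 'X^i)); last first.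
    by move=> i _; rewrite /= pact_one /pref size_mkseq eqxx.
  rewrite -{1}(subn0 (size y)) -/(index_iota 0 (size y)) big_mkord.
  by rewrite -poly_def coefK.
move=> r hr; split.
- move=> H q hq.
  have [cq hcq e] := coef_in hq.
  have [h1 h2] := hr _ hcq.
  case: q e hq => u p e hq; rewrite e /= in h1 h2; subst u.
  case: (eqVneq p (pref (size p))) => [ep|ne]; last exact: J_of.
  have := coef_ract (size p) (fun cq h => proj1 (hr cq h)); rewrite H coef0 -ep => e0.
  by rewrite -e0 eqxx in hq.
- move=> H; apply/polyP => i; rewrite coef0 coef_ract; last by move=> cq /hr [].
  apply/eqP; apply: contraT => hne.
  by case: (notJ_pref (H _ hne)).
Qed.

End Ov.

End Omod.
Import Omod.

Module Pm.
Set Implicit Arguments. Unset Strict Implicit. Unset Printing Implicit Defensive.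
Import GRing.Theory.
Local Open Scope ring_scope.

Section PM.
Variables (k : fieldType) (Q : quiver) (P : gmod k Q).
Hypothesis HP : is_gmod P.
Local Notation T := (gcar P).
Local Notation deg := (gdeg P).
Local Notation act := (gact P).
Local Notation idem := (gidem P).

Lemma actDZ a c (x y : T) : act (c *: x + y) a = c *: act x a + act y a.
Proof. by have [h1 [h2 [h3 [h4 [h5 [h6 [h7 [h8 [h9 h10]]]]]]]]] := HP; apply: h1. Qed.
Lemma idemDZ u c (x y : T) : idem u (c *: x + y) = c *: idem u x + idem u y.
Proof. by have [h1 [h2 [h3 [h4 [h5 [h6 [h7 [h8 [h9 h10]]]]]]]]] := HP; apply: h2. Qed.
Lemma idem_idem u u' (x : T) : idem u (idem u' x) = if u == u' then idem u' x else 0.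
Proof. by have [h1 [h2 [h3 [h4 [h5 [h6 [h7 [h8 [h9 h10]]]]]]]]] := HP; apply: h3. Qed.
Lemma sum_idem (x : T) : x = \sum_(u : vert Q) idem u x.
Proof. by have [h1 [h2 [h3 [h4 [h5 [h6 [h7 [h8 [h9 h10]]]]]]]]] := HP; apply: h4. Qed.
Lemma act_src a (x : T) : act x a = act (idem (src a) x) a.
Proof. by have [h1 [h2 [h3 [h4 [h5 [h6 [h7 [h8 [h9 h10]]]]]]]]] := HP; apply: h5. Qed.
Lemma idem_tgt a (x : T) : idem (tgt a) (act x a) = act x a.
Proof. by have [h1 [h2 [h3 [h4 [h5 [h6 [h7 [h8 [h9 h10]]]]]]]]] := HP; apply: h6. Qed.
Lemma deg_sub i : subspace (deg i).
Proof. by have [h1 [h2 [h3 [h4 [h5 [h6 [h7 [h8 [h9 h10]]]]]]]]] := HP; apply: h7. Qed.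
Lemma deg_act_idem i (x : T) : deg i x ->
  (forall a, deg i.+1 (act x a)) /\ (forall v, deg i (idem v x)).
Proof. by have [h1 [h2 [h3 [h4 [h5 [h6 [h7 [h8 [h9 h10]]]]]]]]] := HP; apply: h8. Qed.
Lemma decomp (x : T) : exists n F, (forall i, deg i (F i)) /\ x = \sum_(i < n) F i.
Proof. by have [h1 [h2 [h3 [h4 [h5 [h6 [h7 [h8 [h9 h10]]]]]]]]] := HP; apply: h9. Qed.
Lemma uniq0 n (F : nat -> T) : (forall i, deg i (F i)) ->
  \sum_(i < n) F i = 0 -> forall i, (i < n)%N -> F i = 0.
Proof. by have [h1 [h2 [h3 [h4 [h5 [h6 [h7 [h8 [h9 h10]]]]]]]]] := HP; apply: h10. Qed.

Lemma self_dbl (z : T) : z = z + z -> z = 0.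
Proof. by rewrite -{1}[z]addr0 => /addrI. Qed.

Lemma act0 a : act 0 a = 0.
Proof. by apply: self_dbl; rewrite -{2}[act 0 a]scale1r -actDZ scale1r addr0. Qed.
Lemma actD a x y : act (x + y) a = act x a + act y a.
Proof. by rewrite -{1}[x]scale1r actDZ scale1r. Qed.
Lemma actZ a c x : act (c *: x) a = c *: act x a.
Proof. by rewrite -[c *: x]addr0 actDZ act0 addr0. Qed.
Lemma idem0 u : idem u 0 = 0.
Proof. by apply: self_dbl; rewrite -{2}[idem u 0]scale1r -idemDZ scale1r addr0. Qed.
Lemma idemD u x y : idem u (x + y) = idem u x + idem u y.
Proof. by rewrite -{1}[x]scale1r idemDZ scale1r. Qed.
Lemma idemZ u c x : idem u (c *: x) = c *: idem u x.
Proof. by rewrite -[c *: x]addr0 idemDZ idem0 addr0. Qed.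

Lemma act_sum a n (F : nat -> T) : act (\sum_(i < n) F i) a = \sum_(i < n) act (F i) a.
Proof. exact: (big_morph (fun x => act x a) (actD a) (act0 a)). Qed.
Lemma idem_sum u n (F : nat -> T) : idem u (\sum_(i < n) F i) = \sum_(i < n) idem u (F i).
Proof. exact: (big_morph (idem u) (idemD u) (idem0 u)). Qed.

Lemma deg0 i : deg i 0. Proof. by case: (deg_sub i). Qed.
Lemma degDZ i c x y : deg i x -> deg i y -> deg i (c *: x + y).
Proof. by case: (deg_sub i) => _; apply. Qed.
Lemma degZ i c x : deg i x -> deg i (c *: x).
Proof. by move=> h; rewrite -[_ *: _]addr0; apply: degDZ => //; apply: deg0. Qed.
Lemma degD i x y : deg i x -> deg i y -> deg i (x + y).
Proof. by move=> h1 h2; rewrite -{1}[x]scale1r; apply: degDZ. Qed.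
Lemma degB i x y : deg i x -> deg i y -> deg i (x - y).
Proof. by move=> h1 h2; rewrite addrC -scaleN1r; apply: degDZ. Qed.

Lemma fold_act0 p : foldl act 0 p = 0.
Proof. by elim: p => //= a p IH; rewrite act0. Qed.

Lemma deg_fold i x p : deg i x -> deg (i + size p)%N (foldl act x p).
Proof.
elim: p i x => [|a p IH] i x hx /=; first by rewrite addn0.
rewrite addnS -addSn; apply: IH; exact: (deg_act_idem hx).1.
Qed.

Definition decT (x : T) := constructive_indefinite_description _ (decomp x).
Definition dn (x : T) : nat := proj1_sig (decT x).
Definition dF (x : T) : nat -> T :=
  proj1_sig (constructive_indefinite_description _ (proj2_sig (decT x))).
Lemma dFP x : (forall i, deg i (dF x i)) /\ x = \sum_(i < dn x) dF x i.
Proof. exact: (proj2_sig (constructive_indefinite_description _ (proj2_sig (decT x)))). Qed.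

Definition comp (i : nat) (x : T) : T := if (i < dn x)%N then dF x i else 0.

Lemma sum_widen n N (F : nat -> T) : (n <= N)%N ->
  \sum_(i < n) F i = \sum_(i < N) (if (i < n)%N then F i else 0).
Proof. by move=> h; rewrite (big_ord_widen N) // big_mkcond. Qed.

Lemma comp_eq n (F : nat -> T) x : (forall i, deg i (F i)) -> x = \sum_(i < n) F i ->
  forall i, comp i x = if (i < n)%N then F i else 0.
Proof.
move=> hF hx i.
set N := maxn n (dn x).
pose G j := (if (j < n)%N then F j else 0) - comp j x.
have hG : forall j, deg j (G j).
  move=> j; apply: degB; first by case: ifP => _; [apply: hF | apply: deg0].
  rewrite /comp; case: ifP => _; [apply: (dFP x).1 | apply: deg0].
have sG : \sum_(j < N) G j = 0.
  rewrite sumrB -sum_widen ?leq_maxl // -hx.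
  rewrite /comp -sum_widen ?leq_maxr // -(dFP x).2.
  by rewrite subrr.
case: (ltnP i N) => hi.
  by apply/esym/eqP; rewrite -subr_eq0; apply/eqP; exact: (uniq0 hG sG hi).
have h1 : (n <= i)%N by apply: leq_trans hi; apply: leq_maxl.
have h2 : (dn x <= i)%N by apply: leq_trans hi; apply: leq_maxr.
by rewrite /comp !ltnNge h1 h2.
Qed.

Lemma comp_deg i x : deg i (comp i x).
Proof. rewrite /comp; case: ifP => _; [apply: (dFP x).1 | apply: deg0]. Qed.

Lemma comp_big i x : (dn x <= i)%N -> comp i x = 0.
Proof. by rewrite /comp leqNgt => /negbTE ->. Qed.

Lemma sum_comp N x : (dn x <= N)%N -> x = \sum_(i < N) comp i x.
Proof. by move=> h; rewrite -sum_widen // {1}(dFP x).2. Qed.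

Lemma comp_hom i j x : deg j x -> comp i x = if i == j then x else 0.
Proof.
move=> hx; rewrite (@comp_eq j.+1 (fun m => if m == j then x else 0) x).
- by case: eqP => [->|_]; rewrite ?ltnSn //; case: ifP.
- by move=> m; case: eqP => [->//|_]; apply: deg0.
rewrite big_ord_recr /= eqxx big1 ?add0r // => m _.
by rewrite (ltn_eqF (ltn_ord m)).
Qed.

Lemma comp_lin i c x y : comp i (c *: x + y) = c *: comp i x + comp i y.
Proof.
set N := maxn (dn x) (dn y).
have e : c *: x + y = \sum_(m < N) (c *: comp m x + comp m y).
  rewrite big_split /= -scaler_sumr -!sum_comp //; [apply: leq_maxr | apply: leq_maxl].
rewrite (comp_eq (F := fun m => c *: comp m x + comp m y) _ e); last first.
  by move=> m; apply: degDZ; apply: comp_deg.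
case: ltnP => // h.
rewrite !comp_big ?scaler0 ?addr0 //; apply: leq_trans h; [apply: leq_maxr | apply: leq_maxl].
Qed.

Lemma comp0 i : comp i 0 = 0.
Proof. by rewrite (comp_eq (n := 0) (F := fun _ => 0)) ?big_ord0 //; apply: deg0. Qed.

Lemma compZ i c x : comp i (c *: x) = c *: comp i x.
Proof. by rewrite -[c *: x]addr0 comp_lin comp0 addr0. Qed.
Lemma compD i x y : comp i (x + y) = comp i x + comp i y.
Proof. by rewrite -{1}[x]scale1r comp_lin scale1r. Qed.

Lemma comp_act_S i x a : comp i.+1 (act x a) = act (comp i x) a.
Proof.
set N := dn x.
pose G m := if m is m'.+1 then act (comp m' x) a else 0.
have e : act x a = \sum_(m < N.+1) G m.
  by rewrite big_ord_recl /= add0r {1}(sum_comp (leqnn N)) (act_sum a N (fun m => comp m x)).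
rewrite (comp_eq _ e); last first.
  by case => [|m] /=; [apply: deg0 | apply: (deg_act_idem (comp_deg m x)).1].
rewrite ltnS /G; case: ltnP => // h.
by rewrite comp_big // act0.
Qed.

Lemma comp_act_0 x a : comp 0 (act x a) = 0.
Proof.
set N := dn x.
pose G m := if m is m'.+1 then act (comp m' x) a else 0.
have e : act x a = \sum_(m < N.+1) G m.
  by rewrite big_ord_recl /= add0r {1}(sum_comp (leqnn N)) (act_sum a N (fun m => comp m x)).
rewrite (comp_eq _ e) //.
by case => [|m] /=; [apply: deg0 | apply: (deg_act_idem (comp_deg m x)).1].
Qed.

Lemma comp_idem i u x : comp i (idem u x) = idem u (comp i x).
Proof.
have e : idem u x = \sum_(m < dn x) idem u (comp m x).
  by rewrite {1}(sum_comp (leqnn (dn x))) (idem_sum u (dn x) (fun m => comp m x)).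
rewrite (comp_eq (F := fun m => idem u (comp m x)) _ e); last first.
  by move=> m; apply: (deg_act_idem (comp_deg m x)).2.
by case: ltnP => // h; rewrite comp_big // idem0.
Qed.

Lemma comp_fold_low i z p : (i < size p)%N -> comp i (foldl act z p) = 0.
Proof.
elim/last_ind: p i => // p a IH i; rewrite size_rcons foldl_rcons.
case: i => [|i] hi; first by rewrite comp_act_0.
by rewrite comp_act_S IH // act0.
Qed.


Hypothesis Hgen : forall x : T, exists s : seq (T * qpath Q),
  (forall yq, yq \in s -> deg 0 yq.1 /\ valid_path yq.2) /\
  x = \sum_(yq <- s) pact yq.1 yq.2.
Hypothesis Hdim : forall i, exists x : T, [/\ deg i x, x <> 0 &
  forall y, deg i y -> exists c : k, y = c *: x].
Hypothesis GK : finite_GKdim Q.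

Definition b i : T := proj1_sig (constructive_indefinite_description _ (Hdim i)).
Lemma bP i : [/\ deg i (b i), b i <> 0 & forall y, deg i y -> exists c : k, y = c *: b i].
Proof. exact: (proj2_sig (constructive_indefinite_description _ (Hdim i))). Qed.

Lemma b_deg i : deg i (b i). Proof. by case: (bP i). Qed.
Lemma b_nz i : b i != 0. Proof. by case: (bP i) => _ /eqP. Qed.
Lemma b_span i y : deg i y -> exists c : k, y = c *: b i. Proof. by case: (bP i) => _ _; apply. Qed.

Lemma scal_cancel (y : T) c d : y != 0 -> c *: y = d *: y -> c = d.
Proof.
move=> hy e; apply/eqP; rewrite -subr_eq0.
have : (c - d) *: y == 0 by rewrite scalerBl e subrr.
by rewrite scaler_eq0 (negbTE hy) orbF.
Qed.

Lemma span_nz i (y z : T) : deg i y -> y != 0 -> deg i z -> exists d, z = d *: y.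
Proof.
move=> hy ny hz; have [cy ey] := b_span hy; have [cz ez] := b_span hz.
have cy0 : cy != 0 by apply: contraNneq ny => e; rewrite ey e scale0r.
by exists (cz / cy); rewrite ey scalerA divfK.
Qed.

Lemma exW i : exists u, idem u (b i) != 0.
Proof.
apply: NNPP => H; move/eqP: (b_nz i); apply; rewrite [b i]sum_idem big1 // => u _.
by apply/eqP; apply: contraT => h; exfalso; apply: H; exists u.
Qed.

Definition W i := xchoose (exW i).

Lemma idem_b i u : idem u (b i) = if u == W i then b i else 0.
Proof.
have hW := xchooseP (exW i); rewrite -/(W i) in hW.
have [c ec] := b_span ((deg_act_idem (b_deg i)).2 (W i)).
have c1 : c = 1.
  have := idem_idem (W i) (W i) (b i); rewrite eqxx {1}ec idemZ ec scalerA.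
  move/(scal_cancel (b_nz i)) => e.
  have c0 : c != 0 by apply: contraNneq hW => e0; rewrite ec e0 scale0r.
  by apply: (mulIf c0); rewrite mul1r.
case: eqP => [->|ne]; first by rewrite ec c1 scale1r.
have [d ed] := b_span ((deg_act_idem (b_deg i)).2 u).
have := idem_idem (W i) u (b i); rewrite (introF eqP (nesym ne)) ed idemZ ec c1 scale1r.
by move=> /eqP; rewrite scaler_eq0 (negbTE (b_nz i)) orbF => /eqP ->; rewrite scale0r.
Qed.

Lemma idem_deg i u y : deg i y -> idem u y = if u == W i then y else 0.
Proof.
move=> hy; have [c ->] := b_span hy; rewrite idemZ idem_b.
by case: ifP; rewrite ?scaler0.
Qed.

Lemma act_nz i y a : deg i y -> act y a != 0 -> src a = W i /\ tgt a = W i.+1.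
Proof.
move=> hy hz; split.
  apply/eqP; apply: contraNT hz => ne.
  by rewrite act_src (idem_deg _ hy) (negbTE ne) act0.
have hz' := (deg_act_idem hy).1 a.
apply/eqP; apply: contraNT hz => ne.
by rewrite -idem_tgt (idem_deg _ hz') (negbTE ne).
Qed.

Lemma comp_pact_zero i (z : T) p : (forall y a, deg i y -> act y a = 0) ->
  deg 0 z -> comp i.+1 (foldl act z p) = 0.
Proof.
move=> H hz; have hd := deg_fold p hz; rewrite add0n in hd.
rewrite (comp_hom i.+1 hd); case: eqP => // e.
move: e hd; case/lastP: p => [|p a] // e _.
rewrite size_rcons in e; case: e => e.
rewrite foldl_rcons H //; have := deg_fold p hz; by rewrite add0n -e.
Qed.

Lemma exA i : exists a, act (b i) a != 0.
Proof.
apply: NNPP => H.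
have H' : forall y a, deg i y -> act y a = 0.
  move=> y a hy; have [c ->] := b_span hy; rewrite actZ.
  have -> : act (b i) a = 0 by apply/eqP; apply: contraT => h; exfalso; apply: H; exists a.
  by rewrite scaler0.
have [s [hs e]] := Hgen (b i.+1).
move/eqP: (b_nz i.+1); apply.
have := comp_hom i.+1 (b_deg i.+1); rewrite eqxx => <-.
rewrite e (big_morph (comp i.+1) (compD i.+1) (comp0 i.+1)) big1_seq //.
move=> yq /andP [_ hyq]; rewrite /pact; apply: comp_pact_zero => //.
exact: (deg_act_idem (hs _ hyq).1).2.
Qed.

Definition al i := xchoose (exA i).
Lemma al_nz i : act (b i) (al i) != 0. Proof. exact: xchooseP (exA i). Qed.
Lemma al_sw i : src (al i) = W i /\ tgt (al i) = W i.+1.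
Proof. exact: act_nz (b_deg i) (al_nz i). Qed.
Lemma hlink i : tgt (al i) = src (al i.+1).
Proof. by rewrite (al_sw i).2 (al_sw i.+1).1. Qed.
Lemma wW i : Comb.w al i = W i.
Proof. by rewrite /Comb.w (al_sw i).1. Qed.

Definition cd : cyc_data al :=
  proj1_sig (constructive_indefinite_description _ (cyc_exists GK hlink)).

Definition n1 := cd_n1 cd.
Definition pp := cd_p cd.
Definition cc := blk al n1 pp.
Definition vv := Comb.w al n1.
Definition a0 := al 0.

Lemma cc_simple : simple_cycle vv cc. Proof. exact: cd_simple. Qed.

Lemma cyc_eq i : (n1 <= i)%N -> cyc cc a0 i = al i.
Proof. by move=> h; rewrite (cd_per h) /cyc /cc size_blk. Qed.

Lemma cv_eq i : (n1 <= i)%N -> cv cc a0 i = W i.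
Proof. by move=> h; rewrite /cv cyc_eq // (al_sw i).1. Qed.

Lemma act_al i y : deg i y -> y != 0 -> act y (al i) != 0.
Proof.
move=> hy ny; have [c ec] := b_span hy.
have c0 : c != 0 by apply: contraNneq ny => e; rewrite ec e scale0r.
by rewrite ec actZ scaler_eq0 negb_or c0 al_nz.
Qed.

Lemma only i y a : (n1 <= i)%N -> deg i y -> act y a != 0 -> a = al i.
Proof.
move=> hi hy hz; have [h1 h2] := act_nz hy hz.
by apply: (cd_only hi); rewrite wW.
Qed.

Fixpoint gam j : T := if j is j'.+1 then act (gam j') (al (n1 + j')) else b n1.

Lemma gamP j : deg (n1 + j) (gam j) /\ gam j != 0.
Proof.
elim: j => [|j [hd hn]] /=; first by split; [rewrite addn0; exact: b_deg | exact: b_nz].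
split; first by rewrite addnS; exact: (deg_act_idem hd).1.
exact: act_al.
Qed.

Definition B i := if (n1 <= i)%N then gam (i - n1) else b i.

Lemma B_deg i : deg i (B i).
Proof. by rewrite /B; case: ifP => h; [rewrite -{1}(subnKC h); exact: (gamP _).1 | exact: b_deg]. Qed.
Lemma B_nz i : B i != 0.
Proof. by rewrite /B; case: ifP => h; [exact: (gamP _).2 | exact: b_nz]. Qed.

Lemma B_act i a : (n1 <= i)%N -> act (B i) a = if a == cyc cc a0 i then B i.+1 else 0.
Proof.
move=> hi; rewrite cyc_eq //.
have hi' : (n1 <= i.+1)%N by apply: leq_trans hi _.
have eS : B i.+1 = act (B i) (al i).
  by rewrite /B hi hi' subSn //= subnKC.
case: eqP => [->|ne] //.
apply/eqP; apply: contraT => h; exfalso; apply: ne.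
exact: (only hi (B_deg i) h).
Qed.

Lemma B_idem i u : (n1 <= i)%N -> idem u (B i) = if u == cv cc a0 i then B i else 0.
Proof. by move=> hi; rewrite cv_eq // (idem_deg _ (B_deg i)). Qed.

Definition scal i (z : T) : k := epsilon (inhabits 0) (fun d => z = d *: B i).
Lemma scalP i z : deg i z -> z = scal i z *: B i.
Proof. move=> hz; apply: (epsilon_spec (inhabits 0) (fun d => z = d *: B i)); exact: span_nz (B_deg i) (B_nz i) hz. Qed.
Lemma scal_uniq i d : scal i (d *: B i) = d.
Proof.
have h := scalP (degZ d (B_deg i)).
by symmetry; apply: (scal_cancel (B_nz i)).
Qed.
Lemma scal0 i : scal i 0 = 0.
Proof. by rewrite -(scale0r (B i)) scal_uniq. Qed.

Definition kap i x := scal i (comp i x).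
Definition fP (x : T) : {poly k} := \poly_(i < dn x) kap i x.
Lemma coef_f x i : (fP x)`_i = kap i x.
Proof. by rewrite coef_poly /kap; case: ltnP => // h; rewrite comp_big // scal0. Qed.
Lemma comp_kap i x : comp i x = kap i x *: B i.
Proof. exact: scalP (comp_deg i x). Qed.


Definition Mp (x : T) : Prop := forall i, (i < n1)%N -> comp i x = 0.

Lemma qgr : qgr_iso P (Om k cc a0).
Proof.
exists Mp, (fun y => y = 0), fP.
split.
  split.
  - split; first by move=> i _; rewrite comp0.
    by move=> c x y hx hy i hi; rewrite comp_lin hx // hy // scaler0 addr0.
  - move=> x a hx [|i] hi; first by rewrite comp_act_0.
    by rewrite comp_act_S hx ?act0 //; apply: ltnW.
  - by move=> x u hx i hi; rewrite comp_idem hx // idem0.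
  - move=> x hx; exists (dn x), (fun i => comp i x); split; last exact: sum_comp.
    move=> i; split; first exact: comp_deg.
    by move=> j hj; rewrite (comp_hom j (comp_deg i x)); case: eqP => [e|] //; rewrite -e; exact: hx.
split.
  move=> x; exists n1 => q _ hq i hi; rewrite /pact comp_fold_low //.
  exact: leq_trans hi hq.
split.
  split.
  - by split => // c x y -> ->; rewrite scaler0 addr0.
  - by move=> x a ->; exact: Omod.act0.
  - by move=> x u ->; exact: Omod.idem0.
  - move=> x ->; exists 0%N, (fun _ => 0); split; last by rewrite big_ord0.
    by move=> i; split => //; exists 0; rewrite scale0r.
split.
  by move=> y ->; exists 0%N => q _ _; rewrite /pact /= Omod.idem0 Omod.fold_act0.
split.
  move=> c x y _ _; apply/polyP => i; rewrite coefD coefZ !coef_f /kap comp_lin.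
  by rewrite (comp_kap i x) (comp_kap i y) scalerA -scalerDl !scal_uniq.
split.
  move=> x a hx; apply/polyP => i; rewrite /= coef_act !coef_f.
  case: i => [|i] /=; first by rewrite /kap comp_act_0 scal0.
  case: (ltnP i n1) => hi.
    have h0 : comp i x = 0 by apply: hx.
    by rewrite /kap comp_act_S h0 act0 !scal0; case: ifP.
  rewrite /kap comp_act_S (comp_kap i x) actZ (B_act _ hi) eq_sym.
  by case: ifP => _; rewrite ?scal_uniq ?scaler0 ?scal0.
split.
  move=> x u hx; apply/polyP => i; rewrite /= coef_idem !coef_f /kap comp_idem.
  case: (ltnP i n1) => hi; first by rewrite hx // idem0 scal0; case: ifP.
  rewrite (comp_kap i x) idemZ B_idem // eq_sym.
  by case: ifP => _; rewrite ?scal_uniq ?scaler0 ?scal0.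
split.
  move=> i x _ hx; exists (kap i x); apply/polyP => j.
  rewrite coef_f coefZ coefXn; case: (eqVneq j i) => [->|ne]; first by rewrite mulr1.
  by rewrite mulr0 /kap (comp_hom j hx) (negbTE ne) scal0.
split.
  move=> x hx hf.
  have hk : forall i, kap i x = 0 by move=> i; rewrite -coef_f hf coef0.
  have -> : x = 0.
    rewrite (sum_comp (leqnn (dn x))) big1 // => i _.
    by rewrite comp_kap hk scale0r.
  by exists 0%N => q _ _; rewrite /pact idem0 fold_act0.
move=> y; exists n1 => q _ hq.
set z := @pact k Q (Om k cc a0) y q.
have hz : forall i, (i < n1)%N -> z`_i = 0.
  by move=> i hi; rewrite /z /pact /=; apply: fold_act_low; exact: leq_trans hi hq.
set X := \sum_(i < size z) z`_i *: B i.
have hc : forall j, comp j X = if (j < size z)%N then z`_j *: B j else 0.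
  by apply: comp_eq => // m; apply: degZ; apply: B_deg.
exists X, 0; split => //.
  by move=> j hj; rewrite hc hz // scale0r; case: ifP.
rewrite addr0; apply/polyP => j; rewrite coef_f /kap hc.
case: ltnP => h; first by rewrite scal_uniq.
by rewrite scal0 nth_default.
Qed.

End PM.


End Pm.
Import Pm.

Theorem proposition5p5 (k : fieldType) (Q : quiver) (P : gmod k Q) :
  finite_GKdim Q -> point_module P ->
  exists (v : vert Q) (c : seq (arr Q)), simple_cycle v c /\
    exists O : gmod k Q, is_Ov v c O /\ qgr_iso P O.
Proof.
move=> GK [HP Hgen Hdim].
exists (vv HP Hgen Hdim GK), (cc HP Hgen Hdim GK); split; first exact: cc_simple.
exists (Om k (cc HP Hgen Hdim GK) (a0 HP Hgen Hdim)); split.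
  exact: Om_Ov (cc_simple HP Hgen Hdim GK).
exact: qgr.
Qed.
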